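(* Let $\langle \mathsf{E}, \mathsf{po}, \mathsf{mo}\rangle$ be a partial 1-Writer execution graph in which $\mathsf{mo}$ agrees with $\mathsf{po}$, and let $\mathsf{rf}_1,\mathsf{rf}_2$ be two reads-from relations over it. (1) If $\mathsf{rf}_1 \sqsubseteq \mathsf{rf}_2$ and $\mathsf{po}\cup\mathsf{rf}_1$ has a cycle, then $\mathsf{po}\cup\mathsf{rf}_2$ has a cycle. (2) If both $\mathsf{rf}_1$ and $\mathsf{rf}_2$ satisfy relaxed-read-coherence, then $\min(\mathsf{rf}_1,\mathsf{rf}_2)$ also satisfies relaxed-read-coherence.
   Context: Events are reads $\mathtt{r}(x,v)$ or writes $\mathtt{w}(x,v)$ on a variable $x$ with value $v$, each belonging to a thread; $\mathsf{po}$ (program order) is a strict partial order totally ordering the events of each thread and relating no events of different threads. 1-Writer: for every variable $x$ all writes to $x$ lie in a single thread. $\mathsf{mo}=\bigcup_x\mathsf{mo}_x$ with $\mathsf{mo}_x$ a strict total order on writes to $x$; ''agrees with $\mathsf{po}$'' means $w\,\mathsf{mo}\,w'$ implies $w\,\mathsf{po}\,w'$. A reads-from relation $\mathsf{rf}$ maps every read $r$ to a unique write $\mathsf{rf}^{-1}(r)$ with the same variable and value. $\mathsf{rf}_1\sqsubseteq\mathsf{rf}_2$ iff for every read $r$, $\mathsf{rf}_1^{-1}(r)\,\mathsf{po}^*\,\mathsf{rf}_2^{-1}(r)$. $\min(\mathsf{rf}_1,\mathsf{rf}_2)$ maps every read $r$ to the $\mathsf{po}$-smaller of $\mathsf{rf}_1^{-1}(r),\mathsf{rf}_2^{-1}(r)$.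 $\mathsf{rf}$ satisfies relaxed-read-coherence if the relation $\mathsf{rf}^{-1};\mathsf{mo}_x;\mathsf{rf}^?;\mathsf{po}$ is irreflexive for every $x$, i.e. there is no read $r$ of $x$ and writes $w,w'$ of $x$ with $w\,\mathsf{rf}\,r$, $w\,\mathsf{mo}_x\,w'$, and either $w'\,\mathsf{po}\,r$ or there is a read $r'$ with $w'\,\mathsf{rf}\,r'$ and $r'\,\mathsf{po}\,r$. *)

(* Defs.v *)
From Stdlib Require Import Relations.
From mathcomp Require Import all_boot.
Set Implicit Arguments. Unset Strict Implicit. Unset Printing Implicit Defensive.

Inductive label (Loc Val : Type) :=
| Rd of Loc & Val
| Wr of Loc & Val.

Section Exec.
Variables (E : finType) (Loc Val : eqType).
Variable lab : E -> label Loc Val.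
Variable tid : E -> nat.

Definition is_read (e : E) : bool := if lab e is Rd _ _ then true else false.
Definition is_write (e : E) : bool := if lab e is Wr _ _ then true else false.
Definition loc (e : E) : Loc := match lab e with Rd x _ => x | Wr x _ => x end.
Definition valu (e : E) : Val := match lab e with Rd _ v => v | Wr _ v => v end.

Definition po_wf (po : rel E) : Prop :=
  [/\ irreflexive po, transitive po,
      (forall a b, tid a = tid b -> a != b -> po a b || po b a) &
      (forall a b, po a b -> tid a = tid b)].

Definition one_writer : Prop :=
  forall w w', is_write w -> is_write w' -> loc w = loc w' -> tid w = tid w'.

Definition mo_wf (mo : rel E) : Prop :=
  [/\ (forall a b, mo a b -> [/\ is_write a, is_write b & loc a = loc b]),
      irreflexive mo, transitive mo &
      (forall a b, is_write a -> is_write b -> loc a = loc b -> a != b ->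
                   mo a b || mo b a)].

Definition mo_x (mo : rel E) (x : Loc) : rel E :=
  fun a b => [&& mo a b, loc a == x & loc b == x].

Definition mo_agrees_po (po mo : rel E) : Prop := forall w w', mo w w' -> po w w'.

(* A reads-from relation, given as the function r |-> rf^{-1}(r) on reads
   (its values on non-read events are irrelevant). *)
Definition rf_wf (rf : E -> E) : Prop :=
  forall r, is_read r ->
    [/\ is_write (rf r), loc (rf r) = loc r & valu (rf r) = valu r].

Definition rf_rel (rf : E -> E) (w r : E) : Prop := is_read r /\ rf r = w.

Definition rf_le (po : rel E) (rf1 rf2 : E -> E) : Prop :=
  forall r, is_read r -> rf1 r = rf2 r \/ po (rf1 r) (rf2 r).

Definition rf_min (po : rel E) (rf1 rf2 : E -> E) : E -> E :=
  fun r => if po (rf2 r) (rf1 r) then rf2 r else rf1 r.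

Definition po_rf (po : rel E) (rf : E -> E) (a b : E) : Prop :=
  po a b \/ rf_rel rf a b.
Definition has_cycle (R : E -> E -> Prop) : Prop :=
  exists e, clos_trans E R e e.

(* relaxed-read-coherence: rf^{-1}; mo_x; rf^?; po irreflexive for every x *)
Definition relaxed_read_coherence (po mo : rel E) (rf : E -> E) : Prop :=
  forall (x : Loc) (r w w' : E),
    rf_rel rf w r -> mo_x mo x w w' ->
    ~ (po w' r \/ exists r', rf_rel rf w' r' /\ po r' r).

End Exec.

(* Main.v *)
Require Import Defs.
From Stdlib Require Import Relations.
From mathcomp Require Import all_boot.

Lemma part1 (E : finType) (Loc Val : eqType)
  (lab : E -> label Loc Val) (po : rel E) (rf1 rf2 : E -> E) :
  transitive po ->
  rf_le lab po rf1 rf2 ->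
  forall a b, clos_trans E (po_rf lab po rf1) a b ->
  clos_trans E (po_rf lab po rf2) a b.
Proof.
move=> Ht Hle a b; elim=> [x y [Hp|[Hr Hxy]]|x y z _ IH1 _ IH2].
- by apply: t_step; left.
- case: (Hle y Hr) => [Heq|Hp].
  + by apply: t_step; right; split=> //; rewrite -Heq.
  + apply: (t_trans _ _ _ (rf2 y)); apply: t_step; [left; rewrite -Hxy // | right; split=> //].
- exact: t_trans IH1 IH2.
Qed.

Lemma key (E : finType) (Loc Val : eqType)
  (lab : E -> label Loc Val) (po mo : rel E) (m g : E -> E) :
  irreflexive po -> transitive po -> mo_wf lab mo -> mo_agrees_po po mo ->
  rf_wf lab g -> rf_wf lab m -> relaxed_read_coherence lab po mo g ->
  (forall r, is_read lab r -> m r = g r \/ po (m r) (g r)) ->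
  forall x r w w', rf_rel lab m w r -> m r = g r -> mo_x lab mo x w w' ->
  ~ (po w' r \/ exists r', rf_rel lab m w' r' /\ po r' r).
Proof.
move=> Hirr Htr [Hmo1 Hmoirr Hmotr Hmotot] Hag Hg Hm Hcoh Hmin x r w w'
  [Hr Hw] Hmg Hmox.
have Hgr : rf_rel lab g w r by split=> //; rewrite -Hmg.
case=> [Hp|[r' [[Hr' Hw'] Hpo]]].
  by apply: (Hcoh x r w w' Hgr Hmox); left.
have Hmox' := Hmox; move/and3P: Hmox' => [Hmww /eqP Hlw /eqP Hlw'].
case: (Hmin r' Hr') => [Heq|Hp].
  by apply: (Hcoh x r w w' Hgr Hmox); right; exists r'; split=> //; split=> //; rewrite -Heq.
set w'' := g r' in Hp *.
have [Wg Lg _] := Hg r' Hr'.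
have [Wm Lm _] := Hm r' Hr'.
have [Ww Ww' _] := Hmo1 _ _ Hmww.
have Hl'' : loc lab w'' = x by rewrite /w'' Lg -Lm Hw'.
have Hmw'' : mo w w''.
  case: (eqVneq w w'') => [Ee|Hne].
    by move: Hp; rewrite Hw' -Ee => Hp; move: (Hirr w); rewrite (Htr _ _ _ (Hag _ _ Hmww) Hp).
  have := Hmotot w w'' Ww Wg; rewrite Hlw Hl'' => /(_ erefl Hne) /orP [//|Hb].
  have Hb' : mo w'' w' := Hmotr _ _ _ Hb Hmww.
  move: (Hirr w''); rewrite (Htr _ _ _ (Hag _ _ Hb') ); first by [].
  by rewrite -Hw'.
apply: (Hcoh x r w w'' Hgr); first by rewrite /mo_x Hmw'' Hlw Hl'' !eqxx.
by right; exists r'; split=> //; split.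
Qed.

Theorem mainTheorem8 (E : finType) (Loc Val : eqType)
  (lab : E -> label Loc Val) (tid : E -> nat) (po mo : rel E)
  (rf1 rf2 : E -> E) :
  po_wf tid po -> one_writer lab tid -> mo_wf lab mo ->
  mo_agrees_po po mo ->
  rf_wf lab rf1 -> rf_wf lab rf2 ->
  (rf_le lab po rf1 rf2 -> has_cycle (po_rf lab po rf1) ->
     has_cycle (po_rf lab po rf2)) /\
  (relaxed_read_coherence lab po mo rf1 ->
   relaxed_read_coherence lab po mo rf2 ->
   relaxed_read_coherence lab po mo (rf_min po rf1 rf2)).
Proof.
move=> [Hirr Htr Htot Hth] H1w Hmo Hag Hw1 Hw2; split.
  by move=> Hle [e He]; exists e; apply: (@part1 _ _ _ lab po rf1 rf2 Htr Hle).
move=> Hc1 Hc2.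
have Hcmp : forall r, is_read lab r -> [\/ rf1 r = rf2 r, po (rf1 r) (rf2 r) | po (rf2 r) (rf1 r)].
  move=> r Hr; have [W1 L1 _] := Hw1 r Hr; have [W2 L2 _] := Hw2 r Hr.
  case: (eqVneq (rf1 r) (rf2 r)) => [E12|Hne]; first by constructor 1.
  have := Htot _ _ (H1w _ _ W1 W2 (etrans L1 (esym L2))) Hne.
  by case/orP=> H; [constructor 2|constructor 3].
have Hmin1 : forall r, is_read lab r -> rf_min po rf1 rf2 r = rf1 r \/ po (rf_min po rf1 rf2 r) (rf1 r).
  move=> r Hr; rewrite /rf_min; case: ifP => H; [by right|by left].
have Hmin2 : forall r, is_read lab r -> rf_min po rf1 rf2 r = rf2 r \/ po (rf_min po rf1 rf2 r) (rf2 r).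
  move=> r Hr; rewrite /rf_min; case: ifP => H; first by left.
  case: (Hcmp r Hr) => [->|Hp|Hp]; [by left|by right|by rewrite Hp in H].
have Hwm : rf_wf lab (rf_min po rf1 rf2).
  by move=> r Hr; rewrite /rf_min; case: ifP => _; [apply: Hw2|apply: Hw1].
move=> x r w w' Hrf Hmox.
have Hr := proj1 Hrf.
have [Eq|Eq] : rf_min po rf1 rf2 r = rf1 r \/ rf_min po rf1 rf2 r = rf2 r.
  by rewrite /rf_min; case: ifP => _; [right|left].
- exact: (@key _ _ _ lab po mo _ _ Hirr Htr Hmo Hag Hw1 Hwm Hc1 Hmin1 x r w w' Hrf Eq Hmox).
- exact: (@key _ _ _ lab po mo _ _ Hirr Htr Hmo Hag Hw2 Hwm Hc2 Hmin2 x r w w' Hrf Eq Hmox).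
Qed.
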